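(* Let $n\ge 3$ and let $(u,v)$ be an MAB pair of binary words with $|u|=|v|=n$, $i=\mathrm{lsb}(u,v)$, $j=\mathrm{lsb}(v,u)$ and $i+j>n$. Write $u=\alpha\gamma\beta$ and $v=\beta'\gamma'\alpha'$ with $|\alpha|=|\alpha'|=n-i$, $|\gamma|=|\gamma'|=i+j-n$ and $|\beta|=|\beta'|=n-j$. Then: (1) $\big||\alpha|_c-|\alpha'|_c\big|=1$ for all $c\in\{a,b\}$ if and only if $\big||\beta|_c-|\beta'|_c\big|=1$ for all $c\in\{a,b\}$; (2) $\big||\beta|_c-|\beta'|_c\big|=1$ for all $c\in\{a,b\}$ if and only if $i+j-n=1$.
   Context: Let $\Sigma=\{a,b\}$. For a word $w$ and a letter $c$, $|w|_c$ denotes the number of occurrences of $c$ in $w$. Two words $x,y$ are abelian equivalent, written $x\sim_{\mathrm{abl}}y$, if $|x|_c=|y|_c$ for all $c\in\Sigma$. For words $u,v$: a pair $(x,y)$ is an internal abelian-border of $(u,v)$ if $x$ is a nonempty proper suffix of $u$, $y$ is a proper prefix of $v$, and $x\sim_{\mathrm{abl}}y$; it is an external abelian-border of $(u,v)$ if $x$ is a nonempty proper prefix of $u$, $y$ is a proper suffix of $v$, and $x\sim_{\mathrm{abl}}y$. The pair $(u,v)$ is mutually abelian-bordered (MAB) if it has both an internal and an external abelian-border, and mutually abelian-unbordered (MAU) if it has neither. If $(u,v)$ has an internal abelian-border, $\mathrm{sb}(u,v)$ denotes its internal abelian-border $(x,y)$ of minimal length and $\mathrm{lsb}(u,v)=|x|$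 is that minimal length. *)

(* Defs.v *)
(* Binary alphabet Sigma = {a,b} is modelled by bool
   (a := true, b := false); words are seq bool. *)
From mathcomp Require Import all_boot all_order all_algebra.
Set Implicit Arguments. Unset Strict Implicit. Unset Printing Implicit Defensive.

Definition word := seq bool.

Definition abel_eq (x y : word) : Prop := forall c : bool, count_mem c x = count_mem c y.

Definition internal_aborder (u v x y : word) : Prop :=
  (0 < size x) /\ (size x < size u) /\ suffix x u /\
  (size y < size v) /\ prefix y v /\ abel_eq x y.

Definition external_aborder (u v x y : word) : Prop :=
  (0 < size x) /\ (size x < size u) /\ prefix x u /\
  (size y < size v) /\ suffix y v /\ abel_eq x y.

Definition has_internal_aborder (u v : word) : Prop :=
  exists x y, internal_aborder u v x y.
Definition has_external_aborder (u v : word) : Prop :=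
  exists x y, external_aborder u v x y.

Definition MAB (u v : word) : Prop :=
  has_internal_aborder u v /\ has_external_aborder u v.

Definition is_lsb (u v : word) (i : nat) : Prop :=
  (exists x y, internal_aborder u v x y /\ size x = i) /\
  (forall x y, internal_aborder u v x y -> i <= size x).

(* Main.v *)
Require Import Defs.
From mathcomp Require Import all_boot all_order all_algebra zify.


Lemma cnt_add (s : word) : count_mem false s + count_mem true s = size s.
Proof. elim: s => //= -[] s IH /=; lia. Qed.

Lemma cnt_size' (s : word) : count_mem true s <= size s.
Proof. have := cnt_add s; lia. Qed.

Lemma cnt_size (s : word) : count_mem false s = size s - count_mem true s.
Proof. have := cnt_add s; lia. Qed.

Lemma cnt_take_step (s : word) k :
  count_mem true (take k s) <= count_mem true (take k.+1 s) <= (count_mem true (take k s)).+1.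
Proof.
rewrite -addn1 takeD count_cat.
have := cnt_size' (take 1 (drop k s)); rewrite size_take.
case: ltnP; lia.
Qed.

Lemma cnt_drop (s : word) k :
  count_mem true (drop k s) = count_mem true s - count_mem true (take k s).
Proof. rewrite -[X in _ = count_mem true X - _](cat_take_drop k s) count_cat; lia. Qed.

Lemma lsb_facts (u v : word) n i : size u = n -> size v = n -> is_lsb u v i ->
  [/\ 0 < i, i < n, count_mem true (drop (n - i) u) = count_mem true (take i v) &
   forall t, 0 < t < i -> count_mem true (drop (n - t) u) <> count_mem true (take t v)].
Proof.
move=> su sv [[x [y [[x0 [xu [sx [yv [py ab]]]]] <-]]] mn].
have sxy : size x = size y.
  have := ab true; have := ab false; rewrite !cnt_size.
  have := cnt_size' x; have := cnt_size' y; lia.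
split => //; first by rewrite -su.
  move: sx py; rewrite suffixE prefixE => /eqP ex /eqP ey.
  by rewrite -su ex sxy ey; apply: ab.
move=> t /andP[t0 ti] E.
have szd : size (drop (n - t) u) = t by rewrite size_drop su; lia.
have szt : size (take t v) = t by rewrite size_take sv; case: ifP; lia.
have tn : t < n by rewrite -su; lia.
suff /mn : internal_aborder u v (drop (n - t) u) (take t v) by rewrite szd; lia.
split; first by rewrite szd.
split; first by rewrite szd su.
split; first exact: suffix_drop.
split; first by rewrite szt sv.
split; first exact: prefix_take.
case; first by [].
by rewrite !cnt_size E szd szt.
Qed.

Lemma cnt_drop' (s : word) k :
  count_mem true (drop k s) + count_mem true (take k s) = count_mem true s.
Proof. rewrite -[X in _ = count_mem true X](cat_take_drop k s) count_cat; lia. Qed.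

Lemma ivt (h : nat -> int) a b : a <= b ->
  (forall t, a <= t < b -> (-1 <= h t.+1 - h t <= 1)%R) ->
  (0 < h a)%R -> (h b < 0)%R -> exists t, a < t < b /\ h t = 0.
Proof.
elim: b => [|b IH] ab hs ha hb.
  move: ab; rewrite leqn0 => /eqP E; subst; exfalso; lia.
case: (leqP a b) => ab'; last first.
  have E : a = b.+1 by lia.
  subst; exfalso; lia.
have hsm := hs b ltac:(lia).
case: (boolP (h b < 0)%R) => c.
  have [t [t1 t2]] : exists t, a < t < b /\ h t = 0.
    by apply: IH => // t tl; apply: hs; lia.
  by exists t; split => //; lia.
case: (boolP (h b == 0)) => /eqP c2.
  exists b; split => //.
  case: (leqP b a) => ba; last by lia.
  have E : a = b by lia.
  subst; exfalso; lia.
exfalso; lia.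
Qed.

Theorem mainTheorem5 (n : nat) (u v : word) (i j : nat)
  (alpha gamma beta alpha' gamma' beta' : word) :
  3 <= n -> MAB u v -> size u = n -> size v = n ->
  is_lsb u v i -> is_lsb v u j -> n < i + j ->
  u = alpha ++ gamma ++ beta -> v = beta' ++ gamma' ++ alpha' ->
  size alpha = n - i -> size alpha' = n - i ->
  size gamma = i + j - n -> size gamma' = i + j - n ->
  size beta = n - j -> size beta' = n - j ->
  ((forall c : bool, `|count_mem c alpha - count_mem c alpha'|%N = 1) <->
   (forall c : bool, `|count_mem c beta - count_mem c beta'|%N = 1)) /\
  ((forall c : bool, `|count_mem c beta - count_mem c beta'|%N = 1) <->
   i + j - n = 1).
Proof.
move=> n3 _ su sv li lj ijn Hu Hv sa sa' sg sg' sb sb'.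
have [i0 iN Fi NF] := @lsb_facts u v n i su sv li.
have [j0 jN Gj NG] := @lsb_facts v u n j sv su lj.
have ea : alpha = take (n - i) u by rewrite Hu take_size_cat.
have eb' : beta' = take (n - j) v by rewrite Hv take_size_cat.
have eb : beta = drop j u.
  by rewrite Hu catA drop_size_cat // size_cat; lia.
have ea' : alpha' = drop i v.
  by rewrite Hv catA drop_size_cat // size_cat; lia.
have fa : count_mem false alpha = n - i - count_mem true alpha by rewrite cnt_size sa.
have fa' : count_mem false alpha' = n - i - count_mem true alpha' by rewrite cnt_size sa'.
have fb : count_mem false beta = n - j - count_mem true beta by rewrite cnt_size sb.
have fb' : count_mem false beta' = n - j - count_mem true beta' by rewrite cnt_size sb'.
have la := cnt_size' alpha; have la' := cnt_size' alpha'.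
have lb := cnt_size' beta; have lb' := cnt_size' beta'.
rewrite sa in la; rewrite sa' in la'; rewrite sb in lb; rewrite sb' in lb'.
have d1 := cnt_drop' u (n - i).
have d2 := cnt_drop' v (n - j).
have d3 := cnt_drop' u j.
have d4 := cnt_drop' v i.
have key : ((Posz (count_mem true alpha)) - (Posz (count_mem true alpha')) =
           (Posz (count_mem true beta)) - (Posz (count_mem true beta')))%R.
  rewrite ea ea' eb eb'; lia.
have P1 : forall c, `|count_mem c alpha - count_mem c alpha'|%N =
                    `|count_mem c beta - count_mem c beta'|%N.
  by case; [lia | rewrite fa fa' fb fb'; lia].
have P2 : forall c, `|count_mem c beta - count_mem c beta'|%N =
                    `|count_mem true beta - count_mem true beta'|%N.
  by case; [lia | rewrite fb fb'; lia].
split.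
  by split => H c; [rewrite -P1 | rewrite P1].
pose h t := (Posz (count_mem true (drop (n - t) u)) - Posz (count_mem true (take t v)))%R.
have hstep : forall t, t < n -> (-1 <= h t.+1 - h t <= 1)%R.
  move=> t tn; rewrite /h (_ : n - t = (n - t.+1).+1); last by lia.
  have := cnt_drop' u (n - t.+1); have := cnt_drop' u (n - t.+1).+1.
  have := cnt_take_step u (n - t.+1); have := cnt_take_step v t; lia.
have hd : h (n - j) = (Posz (count_mem true beta) - Posz (count_mem true beta'))%R.
  by rewrite /h (_ : n - (n - j) = j) ?eb ?eb' //; lia.
have hi : h i = 0 by rewrite /h Fi; lia.
have hnz : forall t, 0 < t < i -> h t <> 0.
  by move=> t tr; have := NF t tr; rewrite /h; lia.
have hs1 := hstep (i.-1) ltac:(lia).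
rewrite (_ : (i.-1).+1 = i) in hs1; last by lia.
have nz1 : h i.-1 <> 0 by apply: hnz; lia.
split.
- move=> H; have := H true; rewrite -hd => Hd.
  case: (leqP (i + j - n) 1) => k; first by lia.
  exfalso.
  have G1 := NG (n - i.+1.-1 + 1) ltac:(lia).
  rewrite (_ : n - (n - i.+1.-1 + 1) = i.-1) in G1; last by lia.
  have e1 := cnt_drop' u (n - i.+1.-1 + 1).
  have e2 := cnt_drop' v i.-1.
  have hh : h i.-1 = (Posz (count_mem true (drop (n - i.+1.-1 + 1) u)) - Posz (count_mem true (take i.-1 v)))%R.
    by rewrite /h (_ : n - i.-1 = n - i.+1.-1 + 1) //; lia.
  have nj : n - j <= i.-1 by lia.
  have hd' := hd; rewrite eb eb' in hd'.
  have [Hp|Hn] : (h (n - j)%N = 1 \/ h (n - j)%N = -1)%R by lia.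
  + have hm : (h i.-1 < 0)%R by lia.
    have [t [t1 t2]] := @ivt h (n - j)%N i.-1 nj (fun t tt => hstep t ltac:(lia)) ltac:(lia) hm.
    by apply: (hnz t) => //; lia.
  + pose h' t := (- h t)%R.
    have hm : (h' i.-1 < 0)%R by rewrite /h'; lia.
    have [t [t1 t2]] := @ivt h' (n - j)%N i.-1 nj (fun t tt => ltac:(have := hstep t ltac:(lia); rewrite /h'; lia)) ltac:(rewrite /h'; lia) hm.
    by apply: (hnz t) => //; [lia | rewrite /h' in t2; lia].
- move=> k c; rewrite P2.
  have e : i.-1 = (n - j)%N by lia.
  rewrite e hi in nz1 hs1.
  rewrite hd in nz1 hs1; lia.
Qed.
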